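(* Let $\mathcal N$ be an $(M,N,q)$-Schreier norming set, $x^*\in\mathcal N$, $k\in\mathbb N$, and let $\mathcal T$ be a functional tree of $x^*$, so that $$x^*=\sum_{\beta\in\mathcal T\ \text{terminal}}\frac{\prod_{\alpha\preceq\beta}\gamma_\alpha}{\prod_{\alpha\prec\beta}m_\alpha}\,e^*_{j_\beta}.$$ Then $$\Big\{j_\beta:\ \beta\ \text{terminal},\ |x^*(e_{j_\beta})|\ge\frac{2\,|\prod_{\alpha\preceq\beta}\gamma_\alpha|}{m_{2k}},\ j_\beta\ge 2k\Big\}\in S_{p_k-1}.$$
   Context: Notation. $c_{00}$ is the space of finitely supported real sequences, $(e_i)_{i\ge1}$ its unit vector basis and $(e_i^* )_{i\ge1}$ the biorthogonal functionals. For a functional $x^*=\sum_i a_ie_i^*$, ${\rm supp}\,x^*=\{i:a_i\neq0\}$. For finite $E,F\subset\mathbb N$, $E<F$ means $\max E<\min F$. $Ba(\ell_q)$ is the closed unit ball of $\ell_q$ (applied to finite scalar sequences). For an interval $E\subset\mathbb N$, $Ex^*$ is the restriction of $x^*$ to the coordinates in $E$. Schreier families: $S_0=\{\{n\}:n\in\mathbb N\}\cup\{\emptyset\}$ and $S_{n+1}=\{\bigcup_{i=1}^mF_i: m\in\mathbb N,\ F_i\in S_n,\ m\le\min F_1,\ F_1<\dots<F_m\}\cup\{\emptyset\}$. Successive finite sets $E_1<\dots<E_k$ are $S_n$-admissible if $\{\min E_1,\dots,\min E_k\}\in S_n$; a finite block sequence $x_1^*,\dots,x_k^*$ is $S_n$-admissible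 if $({\rm supp}\,x_i^* )_{i=1}^k$ is. Sequences. $M=(m_i)$, $N=(n_i)$ are increasing sequences of positive integers such that (i) $m_1>3$, $m_2=m_1^5$, $m_{2j+1}=m_{2j}^5$ for $j\ge1$, and there is an increasing sequence $(s_i)$ of positive integers with $m_{2j}=\prod_{i=1}^{j-1}m_{2i}^{s_i}$ for $j\ge2$; (ii) defining for $j\ge2$ $f_j=\max\{\rho n_1+\sum_{1\le i<j}\rho_in_{2i}:\ \rho,\rho_i\in\mathbb N\cup\{0\},\ m_1^{\rho}\prod_{1\le i<j}m_{2i}^{\rho_i}<m_{2j}\}$, one has $4f_j<n_{2j}$ for all $j\ge2$, and $5n_1<n_2$. For $k\ge1$ put $p_k=5n_1+\sum_{1\le i<k}s_in_{2i}$ (so $p_1=5n_1$). Norming sets. A set $\mathcal N\subset{\rm span}\{e_i^*\}$ is norming if it contains every $e_n^*$, satisfies $|x^*(e_n)|\le1$ for all $x^*\in\mathcal N$, $n\in\mathbb N$, is symmetric, and $Ex^*\in\mathcal N$ for all $x^*\in\mathcal N$ and intervals $E\subset\mathbb N$. $(M,N,q)$-Schreier. Let $1<p,q<\infty$, $1/p+1/q=1$. For $k\ge1$ let $\mathcal N_k$ be the set of all $\frac1{m_{2k}}\sum_{i=1}^d\gamma_ix_i^*$ where $d\in\mathbb N$, $(\gamma_i)_{i=1}^d\in Ba(\ell_q)$, and $x_1^*,\dots,x_d^*\in\mathcal N$ is an $S_{n_{2k}}$-admissible block sequence. Let $\mathcal N^q_\infty$ be the union over $k\ge0$ of the sets of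 all $\frac1{m_{2k+1}}\sum_{i=1}^d\gamma_iEx_i^*$ where $(\gamma_i)\in 2^{1/p}Ba(\ell_q)$, $E$ is an interval of $\mathbb N$, $x_1^*,\dots,x_d^*$ is an $S_{n_{2k+1}}$-admissible block sequence with $x_i^*\in\mathcal N_{j_i}$ and $j_1,\dots,j_d$ pairwise distinct. A norming set $\mathcal N$ is $(M,N,q)$-Schreier if $\mathcal N_j\subset\mathcal N$ for all $j\ge1$ and $\mathcal N\subset\bigcup_{j\ge1}\mathcal N_j\cup\mathcal N^q_\infty\cup\{\pm e_n^*:n\in\mathbb N\}$. Functional trees. A finite partially ordered set $(\mathcal T,\preceq)$ is a tree if $\{\beta:\beta\preceq\alpha\}$ is linearly ordered for each $\alpha$; it is rooted if it has a unique minimal element (the root). $\alpha\prec\beta$ means $\alpha\preceq\beta$ and $\alpha\ne\beta$; $D_\alpha(\mathcal T)$ is the set of immediate successors of $\alpha$; $\alpha$ is terminal if it has no successors; a branch is a maximal linearly ordered subset. A functional tree of $x^*\in\mathcal N$ is a finite rooted tree $\mathcal T$ with root $\alpha_0$ together with, for each node $\alpha$, a functional $x^*_\alpha\in\mathcal N$ and a nonzero scalar $\gamma_\alpha$, such that: $\gamma_{\alpha_0}\in\{1,-1\}$ and $x^*=\gamma_{\alpha_0}x^*_{\alpha_0}$; if $\alpha$ is terminal then $x^*_\alpha=e^*_{j_\alpha}$ for some $j_\alpha\in\mathbb N$; if $\alpha$ is not terminal there is $j\in\mathbb N$ with (setting $m_\alpha=m_j$, $n_\alpha=n_j$) $x^*_\alpha=\frac1{m_\alpha}\sum_{\beta\in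 D_\alpha(\mathcal T)}\gamma_\beta x^*_\beta$, where the $x^*_\beta$, $\beta\in D_\alpha(\mathcal T)$, are nonzero with successive supports and form an $S_{n_\alpha}$-admissible block sequence; if $j$ is even, $(\gamma_\beta)_{\beta\in D_\alpha(\mathcal T)}\in Ba(\ell_q)$; if $j$ is odd, $(\gamma_\beta)_{\beta\in D_\alpha(\mathcal T)}\in 2^{1/p}Ba(\ell_q)$, every $\beta\in D_\alpha(\mathcal T)$ is non-terminal with $m_\beta$ of even index, and the $m_\beta$, $\beta\in D_\alpha(\mathcal T)$, are pairwise distinct. Every element of $\mathcal N$ admits at least one functional tree. For any set $A$ of pairwise incomparable nodes meeting every branch, $x^*=\sum_{\alpha\in A}\frac{\prod_{\beta\preceq\alpha}\gamma_\beta}{\prod_{\beta\prec\alpha}m_\beta}x^*_\alpha$. *)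

(* Defs.v *)
From Stdlib Require Import Reals List Arith Lia Sorting.Sorted.
Import ListNotations.
Open Scope R_scope.

(* Functionals x^* = sum a_i e_i^* are represented by their coefficient
   function  i |-> x^*(e_i)  (indices are positive integers; coordinate 0 unused). *)
Definition func := nat -> R.
Definition zerof : func := fun _ => 0.
Definition ev (n : nat) : func := fun i => if Nat.eqb i n then 1 else 0.
Definition fin_supp (x : func) : Prop :=
  x 0%nat = 0 /\ exists B : nat, forall i, (B < i)%nat -> x i = 0.
Definition nonzero (x : func) : Prop := exists i, x i <> 0.
Definition restrict (a b : nat) (x : func) : func :=
  fun i => if (Nat.leb a i && Nat.leb i b)%bool then x i else 0.

(* |g|^q (with 0^q = 0) and the ball c*Ba(l_q) for finite sequences *)
Definition powabs (q g : R) : R := if Req_EM_T g 0 then 0 else Rpower (Rabs g) q.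
Definition in_lq_ball (q c : R) (gs : list R) : Prop :=
  fold_right Rplus 0 (map (powabs q) gs) <= Rpower c q.

Definition lincomb (gs : list R) (xs : list func) : func :=
  fun i => fold_right Rplus 0 (map (fun gx => fst gx * snd gx i) (combine gs xs)).

(* ---------- Schreier families (finite sets as strictly increasing lists) *)
Fixpoint schreier (n : nat) (l : list nat) : Prop :=
  match n with
  | O => l = [] \/ exists k, (1 <= k)%nat /\ l = [k]
  | S n' => l = [] \/
      (StronglySorted lt l /\
       exists Fs : list (list nat), Fs <> [] /\
         Forall (fun F => F <> [] /\ schreier n' F) Fs /\
         l = concat Fs /\ (length Fs <= hd O l)%nat)
  end.

Definition in_schreier (n : nat) (P : nat -> Prop) : Prop :=
  exists l, schreier n l /\ forall i, In i l <-> P i.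

Definition successive (xs : list func) : Prop :=
  forall a b i j, (a < b < length xs)%nat ->
    nth a xs zerof i <> 0 -> nth b xs zerof j <> 0 -> (i < j)%nat.
Definition block_seq (xs : list func) : Prop := Forall nonzero xs /\ successive xs.
Definition is_min_supp (x : func) (k : nat) : Prop :=
  x k <> 0 /\ forall i, (i < k)%nat -> x i = 0.
Definition admissible (n : nat) (xs : list func) : Prop :=
  exists l : list nat, length l = length xs /\
    (forall a, (a < length xs)%nat -> is_min_supp (nth a xs zerof) (nth a l O)) /\
    schreier n l.

Definition nprod (l : list nat) : nat := fold_right Nat.mul 1%nat l.

Definition MN_conditions (m n s : nat -> nat) : Prop :=
  (forall i, (1 <= i)%nat -> (1 <= m i)%nat /\ (m i < m (S i))%nat) /\
  (forall i, (1 <= i)%nat -> (1 <= n i)%nat /\ (n i < n (S i))%nat) /\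
  (forall i, (1 <= i)%nat -> (1 <= s i)%nat /\ (s i < s (S i))%nat) /\
  (3 < m 1)%nat /\
  m 2%nat = (m 1%nat ^ 5)%nat /\
  (forall j, (1 <= j)%nat -> m (2 * j + 1)%nat = (m (2 * j)%nat ^ 5)%nat) /\
  (forall j, (2 <= j)%nat ->
     m (2 * j)%nat = nprod (map (fun i => m (2 * i)%nat ^ s i) (seq 1 (j - 1))))%nat /\
  (* 4 f_j < n_{2j}: every admissible value rho n_1 + sum rho_i n_{2i} is < n_{2j}/4 *)
  (forall (j rho : nat) (rhos : nat -> nat), (2 <= j)%nat ->
     (m 1%nat ^ rho * nprod (map (fun i => m (2 * i)%nat ^ rhos i) (seq 1 (j - 1))) < m (2 * j)%nat)%nat ->
     (4 * (rho * n 1%nat + list_sum (map (fun i => rhos i * n (2 * i)%nat) (seq 1 (j - 1))))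
        < n (2 * j)%nat)%nat) /\
  (5 * n 1%nat < n 2%nat)%nat.

Definition pk (n s : nat -> nat) (k : nat) : nat :=
  (5 * n 1%nat + list_sum (map (fun i => s i * n (2 * i)%nat) (seq 1 (k - 1))))%nat.

Definition norming_set (NN : func -> Prop) : Prop :=
  (forall x, NN x -> fin_supp x) /\
  (forall j, (1 <= j)%nat -> NN (ev j)) /\
  (forall x j, NN x -> Rabs (x j) <= 1) /\
  (forall x, NN x -> NN (fun i => - x i)) /\
  (forall x a b, NN x -> NN (restrict a b x)).

Definition Nk (m n : nat -> nat) (q : R) (NN : func -> Prop) (k : nat) (x : func) : Prop :=
  exists (xs : list func) (gs : list R),
    xs <> [] /\ length gs = length xs /\ in_lq_ball q 1 gs /\
    Forall NN xs /\ block_seq xs /\ admissible (n (2 * k)%nat) xs /\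
    x = (fun i => / INR (m (2 * k)%nat) * lincomb gs xs i).

Definition Ninf (m n : nat -> nat) (p q : R) (NN : func -> Prop) (x : func) : Prop :=
  exists (k : nat) (xs : list func) (gs : list R) (js : list nat) (a b : nat),
    xs <> [] /\ length gs = length xs /\ length js = length xs /\
    in_lq_ball q (Rpower 2 (/ p)) gs /\
    block_seq xs /\ admissible (n (2 * k + 1)%nat) xs /\ NoDup js /\
    (forall c, (c < length xs)%nat ->
        (1 <= nth c js O)%nat /\ Nk m n q NN (nth c js O) (nth c xs zerof)) /\
    x = (fun i => / INR (m (2 * k + 1)%nat) * lincomb gs (map (restrict a b) xs) i).

Definition schreier_norming (m n : nat -> nat) (p q : R) (NN : func -> Prop) : Prop :=
  norming_set NN /\
  (forall j x, (1 <= j)%nat -> Nk m n q NN j x -> NN x) /\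
  (forall x, NN x ->
     (exists j, (1 <= j)%nat /\ Nk m n q NN j x) \/ Ninf m n p q NN x \/
     (exists j, (1 <= j)%nat /\ (x = ev j \/ x = (fun i => - ev j i)))).

(* Leaf g j : terminal node with gamma = g, x_alpha = e_j^*;
   Node g k ts : node with gamma = g, m_alpha = m_k, n_alpha = n_k, successors ts *)
Inductive ftree : Type :=
| Leaf (g : R) (j : nat)
| Node (g : R) (k : nat) (ts : list ftree).

Definition gam (t : ftree) : R := match t with Leaf g _ => g | Node g _ _ => g end.
Definition node_m (m : nat -> nat) (t : ftree) : nat :=
  match t with Leaf _ _ => O | Node _ k _ => m k end.
Definition node_index (t : ftree) : option nat :=
  match t with Leaf _ _ => None | Node _ k _ => Some k end.

Fixpoint fval (m : nat -> nat) (t : ftree) {struct t} : func :=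
  match t with
  | Leaf _ j => ev j
  | Node _ k ts => fun i => / INR (m k) *
      (fix go (ts : list ftree) : R :=
         match ts with [] => 0 | t' :: r => gam t' * fval m t' i + go r end) ts
  end.

Fixpoint tvalid (m n : nat -> nat) (p q : R) (NN : func -> Prop) (t : ftree) {struct t} : Prop :=
  match t with
  | Leaf g j => g <> 0 /\ (1 <= j)%nat /\ NN (ev j)
  | Node g k ts =>
      g <> 0 /\ (1 <= k)%nat /\ ts <> [] /\ NN (fval m t) /\
      block_seq (map (fval m) ts) /\ admissible (n k) (map (fval m) ts) /\
      (if Nat.even k then in_lq_ball q 1 (map gam ts)
       else in_lq_ball q (Rpower 2 (/ p)) (map gam ts) /\
            (forall t', In t' ts -> exists k', node_index t' = Some k' /\ Nat.even k' = true) /\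
            NoDup (map (node_m m) ts)) /\
      (fix all (ts : list ftree) : Prop :=
         match ts with [] => True | t' :: r => tvalid m n p q NN t' /\ all r end) ts
  end.

Definition functional_tree (m n : nat -> nat) (p q : R) (NN : func -> Prop)
  (x : func) (t : ftree) : Prop :=
  (gam t = 1 \/ gam t = -1) /\ x = (fun i => gam t * fval m t i) /\ tvalid m n p q NN t.

(* terminal nodes beta, listed as pairs (prod_{alpha <= beta} gamma_alpha, j_beta) *)
Fixpoint leaves (t : ftree) : list (R * nat) :=
  match t with
  | Leaf g j => [(g, j)]
  | Node g _ ts => map (fun cj => (g * fst cj, snd cj))
      ((fix go (ts : list ftree) : list (R * nat) :=
          match ts with [] => [] | t' :: r => leaves t' ++ go r end) ts)
  end.

(* Main.v *)
Require Import Defs.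
From Stdlib Require Import Reals List Arith.
Import ListNotations.
Open Scope R_scope.
From Stdlib Require Import Lra Lia Sorting.Sorted.

Open Scope nat_scope.

Lemma schreier_nil : forall n, schreier n [].
Proof. destruct n; simpl; auto. Qed.



Lemma schreier_single : forall n j, (1 <= j)%nat -> schreier n [j].
Proof.
  induction n; intros j Hj; simpl.
  - right. exists j. auto.
  - right. split. { constructor; constructor. }
    exists [[j]]. split. { discriminate. }
    split. { constructor; [|constructor]. split. discriminate. auto. }
    split. reflexivity. simpl. lia.
Qed.

Lemma schreier_sorted : forall n l, schreier n l -> StronglySorted lt l.
Proof.
  destruct n; simpl; intros l H.
  - destruct H as [->|[k [_ ->]]]; repeat constructor.
  - destruct H as [->|[H _]]; [constructor|exact H].
Qed.

Lemma SS_app_inv : forall A B, StronglySorted lt (A ++ B) ->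
  StronglySorted lt A /\ StronglySorted lt B /\ (forall x y, In x A -> In y B -> x < y).
Proof.
  induction A; simpl; intros B H.
  - repeat split; auto. constructor. intros x y [].
  - inversion H as [|? ? Hs Hf]; subst. destruct (IHA B Hs) as [H4 [H5 H6]].
    rewrite Forall_forall in Hf.
    split. constructor; auto. apply Forall_forall. intros x Hx. apply Hf. apply in_or_app; auto.
    split; auto. intros x y [<-|Hx] Hy. apply Hf. apply in_or_app; auto. auto.
Qed.

Lemma SS_app : forall A B, StronglySorted lt A -> StronglySorted lt B ->
  (forall x y, In x A -> In y B -> x < y) -> StronglySorted lt (A ++ B).
Proof.
  induction A; simpl; intros B H1 H2 H3; auto.
  inversion H1 as [|? ? Hs Hf]; subst. constructor. apply IHA; auto.
  apply Forall_forall. intros x Hx. apply in_app_or in Hx. destruct Hx as [Hx|Hx].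
  rewrite Forall_forall in Hf; auto. auto.
Qed.

Lemma SS_concat_in : forall L F, StronglySorted lt (concat L) -> In F L -> StronglySorted lt F.
Proof.
  induction L; simpl; intros F H HF; [destruct HF|].
  apply SS_app_inv in H. destruct H as [H1 [H2 _]]. destruct HF as [<-|HF]; eauto.
Qed.

Lemma SS_hd : forall l y, StronglySorted lt l -> In y l -> hd O l <= y.
Proof.
  intros l y H Hy. destruct l as [|a l]; [destruct Hy|]. simpl.
  destruct Hy as [->|Hy]; auto. inversion H; subst. rewrite Forall_forall in H3.
  apply Nat.lt_le_incl; auto.
Qed.

Inductive dom : list nat -> list nat -> Prop :=
| dom_nil : forall l, dom [] l
| dom_take : forall x y l' l, y <= x -> dom l' l -> dom (x::l') (y::l)
| dom_skip : forall l' y l, dom l' l -> dom l' (y::l).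

Lemma dom_nil_r : forall l', dom l' [] -> l' = [].
Proof. intros l' H; inversion H; auto. Qed.

Lemma dom_app_split : forall A B l', dom l' (A ++ B) ->
  exists l1 l2, l' = l1 ++ l2 /\ dom l1 A /\ dom l2 B.
Proof.
  induction A; simpl; intros B l' H.
  - exists [], l'. repeat split; auto. constructor.
  - inversion H as [|x0 y0 l0 l1 Hle Hd0|l0 y0 l1 Hd0]; subst.
    + exists [], []. repeat split; constructor.
    + destruct (IHA B l0 Hd0) as [l1 [l2 [-> [H5 H6]]]].
      exists (x0::l1), l2. repeat split; auto. constructor; auto.
    + destruct (IHA B l' Hd0) as [l1 [l2 [-> [H5 H6]]]].
      exists l1, l2. repeat split; auto. apply dom_skip; auto.
Qed.

Lemma dom_concat : forall Fs l', dom l' (concat Fs) ->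
  exists Fs', l' = concat Fs' /\ Forall2 dom Fs' Fs.
Proof.
  induction Fs; simpl; intros l' H.
  - apply dom_nil_r in H. subst. exists []. split; auto.
  - apply dom_app_split in H. destruct H as [l1 [l2 [-> [H1 H2]]]].
    destruct (IHFs l2 H2) as [Fs' [-> H3]]. exists (l1 :: Fs'). split; auto.
Qed.

Lemma dom_head : forall x l' l, dom (x::l') l -> exists y, In y l /\ y <= x.
Proof.
  intros x l' l H. remember (x::l') as L. induction H.
  - discriminate.
  - injection HeqL; intros; subst. exists y; simpl; auto.
  - destruct (IHdom HeqL) as [z [Hz Hz']]. exists z; simpl; auto.
Qed.

Definition nonnil (l : list nat) : bool := match l with [] => false | _ => true end.

Lemma concat_filter_nonnil : forall L, concat (filter nonnil L) = concat L.
Proof. induction L as [|[|a l] L IH]; simpl; auto. rewrite IH; auto. Qed.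

Lemma Forall2_in_l : forall {A B} (R : A -> B -> Prop) l1 l2 x, Forall2 R l1 l2 -> In x l1 ->
  exists y, In y l2 /\ R x y.
Proof.
  intros A B R l1 l2 x H. induction H; simpl; intros Hx; [destruct Hx|].
  destruct Hx as [<-|Hx]. exists y; auto. destruct (IHForall2 Hx) as [z [? ?]]; exists z; auto.
Qed.

Lemma dom_schreier : forall n l l', schreier n l -> StronglySorted lt l' -> dom l' l -> schreier n l'.
Proof.
  induction n; intros l l' Hs Hl' Hd; simpl in *.
  - destruct Hs as [->|[k [Hk ->]]].
    + apply dom_nil_r in Hd. auto.
    + inversion Hd as [|x0 y0 l0 l1 Hle Hd0|l0 y0 l1 Hd0]; subst; auto.
      * apply dom_nil_r in Hd0; subst. right. exists x0. split; auto. lia.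
      * apply dom_nil_r in Hd0; subst; auto.
  - destruct Hs as [->|[Hl [Fs [HFs [HF [-> Hlen]]]]]].
    + apply dom_nil_r in Hd. auto.
    + destruct l' as [|x l''] eqn:E; [left; auto|]. right. split; auto.
      rewrite <- E in *.
      destruct (dom_concat _ _ Hd) as [Fs' [Hc HF2]].
      exists (filter nonnil Fs'). split.
      { intro H0. assert (concat (filter nonnil Fs') = []) by (rewrite H0; auto).
        rewrite concat_filter_nonnil, <- Hc, E in H. discriminate. }
      split.
      { apply Forall_forall. intros F HFin. apply filter_In in HFin. destruct HFin as [HFin Hnn].
        split. destruct F; simpl in Hnn; discriminate.
        destruct (Forall2_in_l _ _ _ _ HF2 HFin) as [G [HG HdG]].
        rewrite Forall_forall in HF. destruct (HF G HG) as [_ HGs].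
        apply (IHn G F HGs); auto. rewrite Hc in Hl'. eapply SS_concat_in; eauto. }
      split. rewrite concat_filter_nonnil; auto.
      apply Nat.le_trans with (length Fs').
      { clear. induction Fs' as [|[|a l] L IH]; simpl; lia. }
      rewrite (Forall2_length HF2). eapply Nat.le_trans; [exact Hlen|].
      rewrite E in Hd. destruct (dom_head _ _ _ Hd) as [y [Hy Hy']].
      rewrite E. simpl. eapply Nat.le_trans; [|exact Hy']. apply SS_hd; auto.
Qed.

Lemma split_map_concat : forall (f : list nat -> nat) Gs Ls, map f Ls = concat Gs ->
  exists Lss, Ls = concat Lss /\ Forall2 (fun L G => map f L = G) Lss Gs.
Proof.
  induction Gs; simpl; intros Ls H.
  - destruct Ls; [|discriminate]. exists []. auto.
  - apply map_eq_app in H. destruct H as [L1 [L2 [-> [H1 H2]]]].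
    destruct (IHGs L2 H2) as [Lss [-> H3]]. exists (L1 :: Lss). simpl. auto.
Qed.

Lemma concat_concat' : forall (L : list (list (list nat))), concat (concat L) = concat (map (@concat nat) L).
Proof. induction L; simpl; auto. rewrite concat_app, IHL; auto. Qed.

Lemma union_schreier : forall b a Ls, Forall (fun F => F <> [] /\ schreier a F) Ls ->
  StronglySorted lt (concat Ls) -> schreier b (map (hd O) Ls) -> schreier (a + b) (concat Ls).
Proof.
  induction b; intros a Ls HF Hs Hb; simpl in Hb.
  - rewrite Nat.add_0_r. destruct Hb as [H|[k [_ H]]].
    + destruct Ls; [apply schreier_nil|discriminate].
    + destruct Ls as [|F [|F' Ls]]; try discriminate. simpl. rewrite app_nil_r.
      inversion HF; subst. tauto.
  - destruct Hb as [H|[Hsort [Gs [HGs [HG [Hc Hlen]]]]]].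
    + destruct Ls; [apply schreier_nil|discriminate].
    + rewrite Nat.add_succ_r. simpl. right. split; auto.
      destruct (split_map_concat _ _ _ Hc) as [Lss [-> HL]].
      exists (map (@concat nat) Lss). split.
      { destruct Lss; [inversion HL; subst; congruence|discriminate]. }
      split.
      { apply Forall_forall. intros F HFin. apply in_map_iff in HFin. destruct HFin as [L [<- HL']].
        destruct (Forall2_in_l _ _ _ _ HL HL') as [G [HG' HLG]].
        rewrite Forall_forall in HG. destruct (HG G HG') as [HGn HGsch].
        assert (HFL : Forall (fun F => F <> [] /\ schreier a F) L).
        { rewrite Forall_forall in *. intros F HF'. apply HF. apply in_concat. eauto. }
        split.
        - destruct L as [|F L]. simpl in HLG. congruence.
          inversion HFL; subst. simpl. destruct F; [tauto|discriminate].
        - apply IHb; auto. rewrite concat_concat' in Hs. eapply SS_concat_in; eauto.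
          apply in_map; auto. rewrite HLG; auto. }
      split. apply concat_concat'.
      rewrite length_map, (Forall2_length HL).
      eapply Nat.le_trans; [exact Hlen|].
      destruct Lss as [|L Lss]; [simpl; lia|]. simpl.
      inversion HL as [|? G ? Gs' HLG HL']; subst.
      destruct L as [|F L]; [simpl in *; subst; inversion HG; tauto|].
      simpl. inversion HF as [|? ? [HFn _] _]; subst. destruct F; [tauto|simpl; lia].
Qed.

Lemma concat_singletons : forall l : list nat, concat (map (fun x => [x]) l) = l.
Proof. induction l; simpl; auto. rewrite IHl; auto. Qed.

Lemma schreier_one : forall l, l <> [] -> StronglySorted lt l -> (forall x, In x l -> 1 <= x) ->
  length l <= hd O l -> schreier 1 l.
Proof.
  intros l Hn Hs Hp Hl. simpl. right. split; auto.
  exists (map (fun x => [x]) l). split. destruct l; [congruence|discriminate].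
  split. apply Forall_forall. intros F HF. apply in_map_iff in HF. destruct HF as [x [<- Hx]].
  split. discriminate. right. exists x. auto.
  split. rewrite concat_singletons; auto. rewrite length_map; auto.
Qed.

Open Scope nat_scope.

Fixpoint cnt (x : nat) (l : list nat) : nat :=
  match l with [] => 0 | y :: r => (if Nat.eqb x y then 1 else 0) + cnt x r end.

Lemma nprod_app : forall A B, nprod (A ++ B) = nprod A * nprod B.
Proof. induction A; simpl; intros; auto. rewrite IHA; lia. Qed.

Lemma nprod_map_mul : forall (f g : nat -> nat) S,
  nprod (map (fun e => f e * g e) S) = nprod (map f S) * nprod (map g S).
Proof. induction S; simpl; auto. rewrite IHS; lia. Qed.

Lemma sum_map_add : forall (f g : nat -> nat) S,
  list_sum (map (fun e => f e + g e) S) = list_sum (map f S) + list_sum (map g S).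
Proof. induction S; simpl; auto. rewrite IHS; lia. Qed.

Lemma nprod_delta0 : forall (f : nat -> nat) x S, ~ In x S ->
  nprod (map (fun e => f e ^ (if Nat.eqb x e then 1 else 0)) S) = 1.
Proof.
  induction S; simpl; intros H; auto. destruct (Nat.eqb_spec x a); [subst; tauto|].
  rewrite IHS by tauto. simpl; lia.
Qed.

Lemma nprod_delta : forall (f : nat -> nat) x S, NoDup S -> In x S ->
  nprod (map (fun e => f e ^ (if Nat.eqb x e then 1 else 0)) S) = f x.
Proof.
  induction S; simpl; intros HN H; [destruct H|]. apply NoDup_cons_iff in HN.
  destruct (Nat.eqb_spec x a).
  - subst. rewrite nprod_delta0; [simpl; lia|tauto].
  - destruct H as [H|H]; [congruence|]. rewrite IHS by tauto. simpl; lia.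
Qed.

Lemma sum_delta0 : forall (f : nat -> nat) x S, ~ In x S ->
  list_sum (map (fun e => (if Nat.eqb x e then 1 else 0) * f e) S) = 0.
Proof.
  induction S; simpl; intros H; auto. destruct (Nat.eqb_spec x a); [subst; tauto|].
  rewrite IHS by tauto. simpl; lia.
Qed.

Lemma sum_delta : forall (f : nat -> nat) x S, NoDup S -> In x S ->
  list_sum (map (fun e => (if Nat.eqb x e then 1 else 0) * f e) S) = f x.
Proof.
  induction S; simpl; intros HN H; [destruct H|]. apply NoDup_cons_iff in HN.
  destruct (Nat.eqb_spec x a).
  - subst. rewrite sum_delta0; [simpl; lia|tauto].
  - destruct H as [H|H]; [congruence|]. rewrite IHS by tauto. simpl; lia.
Qed.

Lemma nprod_pow0 : forall (f : nat -> nat) S, nprod (map (fun e => f e ^ 0) S) = 1.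
Proof. induction S as [|a S IH]; simpl in *; auto; lia. Qed.

Lemma gb_prod : forall (f : nat -> nat) S R, NoDup S -> (forall x, In x R -> In x S) ->
  nprod (map f R) = nprod (map (fun e => f e ^ cnt e R) S).
Proof.
  intros f S R HN. induction R as [|y R IH]; intros HR; simpl.
  - clear. induction S; simpl in *; lia.
  - rewrite IH by (intros; apply HR; simpl; auto).
    rewrite (map_ext (fun e => f e ^ ((if Nat.eqb e y then 1 else 0) + cnt e R))
       (fun e => f e ^ (if Nat.eqb y e then 1 else 0) * f e ^ cnt e R)).
    2:{ intros e. rewrite Nat.pow_add_r. rewrite Nat.eqb_sym. auto. }
    rewrite nprod_map_mul. rewrite nprod_delta; auto. apply HR; simpl; auto.
Qed.

Lemma gb_sum : forall (f : nat -> nat) S R, NoDup S -> (forall x, In x R -> In x S) ->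
  list_sum (map f R) = list_sum (map (fun e => cnt e R * f e) S).
Proof.
  intros f S R HN. induction R as [|y R IH]; intros HR; simpl.
  - clear. induction S; simpl in *; lia.
  - rewrite IH by (intros; apply HR; simpl; auto).
    rewrite (map_ext (fun e => ((if Nat.eqb e y then 1 else 0) + cnt e R) * f e)
       (fun e => (if Nat.eqb y e then 1 else 0) * f e + cnt e R * f e)).
    2:{ intros e. rewrite Nat.mul_add_distr_r. rewrite Nat.eqb_sym. auto. }
    rewrite sum_map_add. rewrite sum_delta; auto. apply HR; simpl; auto.
Qed.

Lemma nprod_filter : forall (f : nat -> nat) x R,
  nprod (map f R) = f x ^ cnt x R * nprod (map f (filter (fun b => negb (Nat.eqb x b)) R)).
Proof.
  intros f x R; induction R as [|y R IH]; simpl; auto.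
  destruct (Nat.eqb_spec x y); simpl.
  - subst. rewrite IH. lia.
  - rewrite IH. simpl. lia.
Qed.

Lemma sum_filter : forall (f : nat -> nat) x R,
  list_sum (map f R) = cnt x R * f x + list_sum (map f (filter (fun b => negb (Nat.eqb x b)) R)).
Proof.
  intros f x R; induction R as [|y R IH]; simpl; auto.
  destruct (Nat.eqb_spec x y); simpl.
  - subst. rewrite IH. lia.
  - rewrite IH. simpl. lia.
Qed.

Lemma nprod_ge1 : forall l, (forall x, In x l -> 1 <= x) -> 1 <= nprod l.
Proof.
  induction l; simpl; intros H; auto. specialize (IHl (fun x Hx => H x (or_intror Hx))).
  specialize (H a (or_introl eq_refl)). nia.
Qed.

Lemma nprod_ge_elt : forall l x, (forall x, In x l -> 1 <= x) -> In x l -> x <= nprod l.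
Proof.
  induction l; simpl; intros x H Hx; [destruct Hx|].
  destruct Hx as [<-|Hx].
  - assert (1 <= nprod l) by (apply nprod_ge1; auto). nia.
  - specialize (IHl x (fun y Hy => H y (or_intror Hy)) Hx). specialize (H a (or_introl eq_refl)). nia.
Qed.

Lemma nprod_split : forall M (f : nat -> nat) R acc, acc < M -> M <= acc * nprod (map f R) ->
  exists R0 x R2, R = R0 ++ x :: R2 /\ acc * nprod (map f R0) < M /\ M <= acc * nprod (map f R0) * f x.
Proof.
  intros M f R; induction R as [|y R IH]; simpl; intros acc H1 H2.
  - lia.
  - destruct (le_lt_dec M (acc * f y)).
    + exists [], y, R. simpl. split; auto. split; lia.
    + destruct (IH (acc * f y)) as [R0 [x [R2 [-> [H3 H4]]]]]; auto. lia.
      exists (y :: R0), x, R2. simpl. split; auto. split; lia.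
Qed.

Lemma filter_all_eq : forall x B, (forall b, In b B -> b = x) -> filter (fun b => negb (Nat.eqb x b)) B = [].
Proof.
  induction B; simpl; intros H; auto. rewrite (H a (or_introl eq_refl)), Nat.eqb_refl. simpl.
  apply IHB; auto.
Qed.

Lemma in_filter_neq : forall x b B, In b (filter (fun b => negb (Nat.eqb x b)) B) -> In b B /\ b <> x.
Proof.
  intros x b B H. apply filter_In in H. destruct H as [H1 H2]. split; auto.
  intros ->. rewrite Nat.eqb_refl in H2. discriminate.
Qed.

Section NT.
Variables m n s : nat -> nat.
Hypothesis HMN : MN_conditions m n s.

Lemma m_pos : forall i, 1 <= i -> 1 <= m i.
Proof. intros i Hi. destruct HMN as [Hm _]. apply Hm; auto. Qed.
Lemma n_pos : forall i, 1 <= i -> 1 <= n i.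
Proof. intros i Hi. destruct HMN as [_ [Hn _]]. apply Hn; auto. Qed.

Lemma m_mono : forall a b, 1 <= a -> a < b -> m a < m b.
Proof.
  intros a b Ha Hab. destruct HMN as [Hm _]. induction Hab.
  - apply Hm; auto.
  - eapply Nat.lt_trans; eauto. apply Hm. lia.
Qed.

Lemma m_mono_inv : forall a b, 1 <= a -> 1 <= b -> m a < m b -> a < b.
Proof.
  intros a b Ha Hb H. destruct (lt_dec a b); auto.
  destruct (Nat.eq_dec a b). subst; lia.
  pose proof (m_mono b a Hb ltac:(lia)). lia.
Qed.

Lemma n_mono : forall a b, 1 <= a -> a < b -> n a < n b.
Proof.
  intros a b Ha Hab. destruct HMN as [_ [Hn _]]. induction Hab.
  - apply Hn; auto.
  - eapply Nat.lt_trans; eauto. apply Hn. lia.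
Qed.

Definition okb (b : nat) : Prop := b = 1 \/ exists i, 1 <= i /\ b = 2 * i.

Lemma okb_pos : forall b, okb b -> 1 <= b.
Proof. intros b [->|[i [Hi ->]]]; lia. Qed.

Lemma m_le_prod : forall B x, (forall b, In b B -> okb b) -> In x B -> m x <= nprod (map m B).
Proof.
  intros B x HB Hx. apply nprod_ge_elt.
  - intros y Hy. apply in_map_iff in Hy. destruct Hy as [b [<- Hb]]. apply m_pos, okb_pos, HB; auto.
  - apply in_map; auto.
Qed.

Lemma prod_ge1 : forall B, (forall b, In b B -> okb b) -> 1 <= nprod (map m B).
Proof.
  intros B HB. apply nprod_ge1. intros y Hy. apply in_map_iff in Hy.
  destruct Hy as [b [<- Hb]]. apply m_pos, okb_pos, HB; auto.
Qed.

Definition Sset (j : nat) := 1 :: map (fun i => 2 * i) (seq 1 (j - 1)).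

Lemma Sset_nodup : forall j, NoDup (Sset j).
Proof.
  intros j. unfold Sset. constructor.
  - intros H. apply in_map_iff in H. destruct H as [i [H _]]. lia.
  - apply NoDup_map_NoDup_ForallPairs. intros x y _ _ H; lia. apply seq_NoDup.
Qed.

Lemma FL : forall j R, 2 <= j ->
  (forall b, In b R -> b = 1 \/ exists i, 1 <= i /\ i <= j - 1 /\ b = 2 * i) ->
  nprod (map m R) < m (2 * j) -> 4 * list_sum (map n R) < n (2 * j).
Proof.
  intros j R Hj HR Hp.
  assert (HS : forall x, In x R -> In x (Sset j)).
  { intros x Hx. destruct (HR x Hx) as [->|[i [H1 [H2 ->]]]]; simpl; auto.
    right. apply in_map_iff. exists i. split; [lia|]. apply in_seq. lia. }
  rewrite (gb_prod m (Sset j) R (Sset_nodup j) HS) in Hp.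
  rewrite (gb_sum n (Sset j) R (Sset_nodup j) HS).
  unfold Sset in *. simpl in *. rewrite map_map in *.
  destruct HMN as [_ [_ [_ [_ [_ [_ [_ [Hf _]]]]]]]].
  pose proof (Hf j (cnt 1 R) (fun i => cnt (2 * i) R) Hj) as H.
  simpl in H. lia.
Qed.

Lemma SL : forall j, 2 <= j -> forall d, 1 <= d -> forall R,
  (forall b, In b R -> b = 1 \/ exists i, 1 <= i /\ i <= j - 1 /\ b = 2 * i) ->
  nprod (map m R) < m (2 * j) ^ d -> 4 * list_sum (map n R) < (2 * d - 1) * n (2 * j).
Proof.
  intros j Hj d. induction d as [|d IH]; intros Hd R HR Hp; [lia|].
  assert (Hm1 : m 1 < m (2 * j)) by (apply m_mono; lia).
  assert (HM : forall b, In b R -> m b < m (2 * j)).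
  { intros b Hb. destruct (HR b Hb) as [->|[i [H1 [H2 ->]]]]; auto. apply m_mono; lia. }
  destruct (lt_dec (nprod (map m R)) (m (2 * j))) as [Hlt|Hge].
  - pose proof (FL j R Hj HR Hlt). nia.
  - assert (Hd' : 1 <= d).
    { destruct d; [|lia]. rewrite Nat.pow_1_r in Hp. lia. }
    assert (H1M : 1 < m (2 * j)) by (destruct HMN as [_ [_ [_ [Hm3 _]]]]; lia).
    destruct (nprod_split (m (2 * j)) m R 1 H1M ltac:(lia)) as [R0 [x [R2 [-> [H3 H4]]]]].
    rewrite map_app in Hp. simpl in Hp. rewrite nprod_app in Hp. simpl in Hp.
    rewrite Nat.mul_1_l in H3, H4.
    assert (HR2 : nprod (map m R2) < m (2 * j) ^ d).
    { apply (Nat.mul_lt_mono_pos_l (m (2 * j))). lia.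
      eapply Nat.le_lt_trans; [|exact Hp]. 
      replace (nprod (map m R0) * (m x * nprod (map m R2))) with (nprod (map m R0) * m x * nprod (map m R2)) by lia.
      apply Nat.mul_le_mono_r; auto. }
    assert (A1 := IH Hd' R2 (fun b Hb => HR b ltac:(apply in_or_app; right; right; auto)) HR2).
    assert (A2 := FL j R0 Hj (fun b Hb => HR b ltac:(apply in_or_app; left; auto)) H3).
    assert (A3 := FL j [x] Hj (fun b Hb => HR b ltac:(destruct Hb as [<-|[]]; apply in_or_app; right; left; auto))
       ltac:(simpl; rewrite Nat.mul_1_r; apply HM; apply in_or_app; right; left; auto)).
    rewrite map_app, list_sum_app. simpl in *. nia.
Qed.

Lemma BL : forall k, 1 <= k -> forall B, (forall b, In b B -> okb b) ->
  nprod (map m B) < m (2 * k) -> list_sum (map n B) <= pk n s k - 1.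
Proof.
  destruct HMN as [Hm [Hn [Hs [Hm1 [Hm2 [Hodd [Heven [Hf Hn12]]]]]]]].
  assert (Hsmall : forall k B b i, 1 <= k -> (forall b, In b B -> okb b) -> nprod (map m B) < m (2 * k) ->
     In b B -> 1 <= i -> b = 2 * i -> i < k).
  { intros k B b i Hk HB Hp Hb Hi ->. pose proof (m_le_prod B _ HB Hb).
    assert (2 * i < 2 * k) by (apply m_mono_inv; lia). lia. }
  induction k as [|k IH]; intros Hk B HB Hp; [lia|].
  destruct k as [|[|k']].
  -
    assert (Hall : forall b, In b B -> b = 1).
    { intros b Hb. destruct (HB b Hb) as [->|[i [Hi Hbi]]]; auto.
      pose proof (Hsmall 1 B b i ltac:(lia) HB Hp Hb Hi Hbi). lia. }
    rewrite (nprod_filter m 1), filter_all_eq in Hp by auto.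
    rewrite (sum_filter n 1), filter_all_eq by auto.
    simpl in Hp. rewrite Nat.mul_1_r, Hm2 in Hp.
    apply Nat.pow_lt_mono_r_iff in Hp; [|lia].
    unfold pk. simpl. pose proof (n_pos 1 ltac:(lia)). nia.
  -
    assert (Hall : forall b, In b B -> b = 1 \/ b = 2).
    { intros b Hb. destruct (HB b Hb) as [->|[i [Hi Hbi]]]; auto.
      pose proof (Hsmall 2 B b i ltac:(lia) HB Hp Hb Hi Hbi). right; lia. }
    set (B1 := filter (fun b => negb (Nat.eqb 1 b)) B).
    assert (Hall1 : forall b, In b B1 -> b = 2).
    { intros b Hb. apply in_filter_neq in Hb. destruct Hb as [Hb Hb1]. destruct (Hall b Hb); lia. }
    rewrite (nprod_filter m 1) in Hp. fold B1 in Hp.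
    rewrite (nprod_filter m 2 B1), filter_all_eq in Hp by auto.
    rewrite (sum_filter n 1). fold B1.
    rewrite (sum_filter n 2 B1), filter_all_eq by auto.
    simpl in Hp. rewrite Nat.mul_1_r, Hm2 in Hp.
    assert (H4 := Heven 2 ltac:(lia)). simpl in H4. rewrite Hm2 in H4.
    rewrite H4 in Hp. rewrite <- !Nat.pow_mul_r, <- Nat.pow_add_r in Hp.
    rewrite Nat.mul_1_r in Hp.
    apply Nat.pow_lt_mono_r_iff in Hp; [|lia].
    unfold pk. simpl. pose proof (n_pos 1 ltac:(lia)). nia.
  -
    set (k0 := S (S k')).
    assert (Hk0 : 2 <= k0) by (unfold k0; lia).
    assert (HMK : m (2 * S k0) = m (2 * k0) ^ (s k0 + 1)).
    { rewrite (Heven (S k0)) by lia.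
      replace (S k0 - 1) with (S (k0 - 1)) by lia. rewrite seq_S, map_app, nprod_app.
      replace (1 + (k0 - 1)) with k0 by lia. rewrite <- (Heven k0) by lia.
      assert (E : nprod (map (fun i => m (2*i)^s i) [k0]) = m(2*k0)^s k0) by (simpl; lia).
      rewrite E, Nat.pow_add_r, Nat.pow_1_r. lia. }
    assert (HPK : pk n s (S k0) = pk n s k0 + s k0 * n (2 * k0)).
    { unfold pk. replace (S k0 - 1) with (S (k0 - 1)) by lia. rewrite seq_S, map_app, list_sum_app.
      replace (1 + (k0 - 1)) with k0 by lia.
      assert (E : list_sum (map (fun i => s i * n (2*i)) [k0]) = s k0 * n (2*k0)) by (simpl; lia).
      rewrite E. lia. }
    fold k0 in Hp, IH |- *. rewrite HPK.
    set (R := filter (fun b => negb (Nat.eqb (2 * k0) b)) B).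
    assert (HR : forall b, In b R -> okb b /\ (b = 1 \/ exists i, 1 <= i /\ i <= k0 - 1 /\ b = 2 * i)).
    { intros b Hb. apply in_filter_neq in Hb. destruct Hb as [Hb Hbne]. split; auto.
      destruct (HB b Hb) as [->|[i [Hi Hbi]]]; auto. right. exists i.
      pose proof (Hsmall (S k0) B b i ltac:(lia) HB Hp Hb Hi Hbi). lia. }
    rewrite (nprod_filter m (2 * k0)) in Hp. fold R in Hp.
    rewrite (sum_filter n (2 * k0)). fold R.
    rewrite HMK in Hp.
    set (c := cnt (2 * k0) B) in *.
    set (M' := m (2 * k0)) in *.
    assert (HM'1 : 1 < M') by (unfold M'; pose proof (m_mono 1 (2 * k0) ltac:(lia) ltac:(lia)); lia).
    assert (HPR : 1 <= nprod (map m R)) by (apply prod_ge1; intros; apply HR; auto).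
    assert (Hc : c <= s k0).
    { destruct (le_lt_dec c (s k0)); auto.
      assert (M' ^ (s k0 + 1) <= M' ^ c) by (apply Nat.pow_le_mono_r; lia). nia. }
    assert (Hpk0 : 1 <= pk n s k0) by (unfold pk; pose proof (n_pos 1 ltac:(lia)); lia).
    destruct (Nat.eq_dec c (s k0)) as [Heq|Hne].
    + rewrite Heq in Hp. rewrite Nat.pow_add_r, Nat.pow_1_r in Hp.
      apply Nat.mul_lt_mono_pos_l in Hp; [|apply Nat.neq_0_lt_0; apply Nat.pow_nonzero; lia].
      assert (IH' := IH ltac:(lia) R (fun b Hb => proj1 (HR b Hb)) Hp). rewrite Heq. lia.
    + set (d := s k0 + 1 - c).
      replace (s k0 + 1) with (c + d) in Hp by (unfold d; lia).
      rewrite Nat.pow_add_r in Hp.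
      apply Nat.mul_lt_mono_pos_l in Hp; [|apply Nat.neq_0_lt_0; apply Nat.pow_nonzero; lia].
      assert (A := SL k0 Hk0 d ltac:(unfold d; lia) R (fun b Hb => proj2 (HR b Hb)) Hp).
      assert (Hlt : list_sum (map n R) < (s k0 - c) * n (2 * k0)).
      { replace (s k0 - c) with (d - 1) by (unfold d; lia).
        assert (2 <= d) by (unfold d; lia). nia. }
      nia.
Qed.

Definition cst (e : nat) : nat := if Nat.even e then n e else 1.
Definition cost (l : list nat) : nat := list_sum (map cst l).
Definition prodm (l : list nat) : nat := nprod (map m l).
Definition base (e : nat) : list nat :=
  if Nat.even e then [e] else if Nat.eqb e 1 then [1] else repeat (e - 1) 5.

Lemma odd_decomp : forall e, Nat.even e = false -> exists j, e = 2 * j + 1.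
Proof.
  intros e H. assert (Nat.odd e = true) by (rewrite <- Nat.negb_even, H; auto).
  apply Nat.odd_spec in H0. destruct H0 as [j Hj]. exists j; lia.
Qed.

Lemma even_decomp : forall e, Nat.even e = true -> exists j, e = 2 * j.
Proof. intros e H. apply Nat.even_spec in H. destruct H as [j Hj]; exists j; lia. Qed.

Lemma base_props : forall e, 1 <= e ->
  (forall b, In b (base e) -> okb b) /\ m e = nprod (map m (base e)) /\
  cst e <= list_sum (map n (base e)).
Proof.
  destruct HMN as [Hm [Hn [Hs [Hm1 [Hm2 [Hodd [Heven [Hf Hn12]]]]]]]].
  intros e He. unfold base, cst. destruct (Nat.even e) eqn:Ee.
  - destruct (even_decomp e Ee) as [j ->]. simpl. split; [|split; lia].
    intros b [<-|[]]. right. exists j; split; lia.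
  - destruct (odd_decomp e Ee) as [j ->]. destruct (Nat.eqb_spec (2 * j + 1) 1).
    + assert (j = 0) by lia. subst j. simpl. split; [|split; [lia|]]. intros b [<-|[]]. left; auto.
      pose proof (n_pos 1 ltac:(lia)). lia.
    + replace (2 * j + 1 - 1) with (2 * j) by lia.
      assert (1 <= j) by lia.
      split; [|split].
      * intros b Hb. apply repeat_spec in Hb. subst. right. exists j; split; lia.
      * rewrite Hodd by auto. simpl. lia.
      * pose proof (n_pos (2 * j) ltac:(lia)). simpl in *. lia.
Qed.

Lemma AL : forall k pi, 1 <= k -> (forall e, In e pi -> 1 <= e) ->
  2 * prodm pi <= m (2 * k) -> cost pi <= pk n s k - 1.
Proof.
  intros k pi Hk Hpi Hp.
  set (B := concat (map base pi)).
  assert (HB : (forall b, In b B -> okb b) /\ prodm pi = nprod (map m B) /\ cost pi <= list_sum (map n B)).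
  { unfold B, prodm, cost. clear Hp. induction pi as [|e pi IH]; simpl.
    - split; [intros b []|]. auto.
    - destruct (base_props e (Hpi e (or_introl eq_refl))) as [H1 [H2 H3]].
      destruct IH as [I1 [I2 I3]]. intros; apply Hpi; simpl; auto.
      split. intros b Hb. apply in_app_or in Hb. destruct Hb; auto.
      rewrite map_app, nprod_app, <- H2, <- I2. split; auto. rewrite map_app, list_sum_app. lia. }
  destruct HB as [H1 [H2 H3]].
  eapply Nat.le_trans; [exact H3|]. apply BL; auto.
  pose proof (prod_ge1 B H1). lia.
Qed.

End NT.

Open Scope nat_scope.

Fixpoint ftree_ind2 (P : ftree -> Prop) (HL : forall g j, P (Leaf g j))
  (HN : forall g k ts, Forall P ts -> P (Node g k ts)) (t : ftree) : P t :=
  match t with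
  | Leaf g j => HL g j
  | Node g k ts => HN g k ts
      ((fix go (ts : list ftree) : Forall P ts :=
         match ts with [] => Forall_nil _ | t' :: r => Forall_cons _ (ftree_ind2 P HL HN t') (go r) end) ts)
  end.

Fixpoint leavesP (t : ftree) : list (R * nat * list nat) :=
  match t with
  | Leaf g j => [((g, j), [])]
  | Node g k ts => map (fun x => ((g * fst (fst x))%R, snd (fst x), k :: snd x))
      ((fix go (ts : list ftree) : list (R * nat * list nat) :=
          match ts with [] => [] | t' :: r => leavesP t' ++ go r end) ts)
  end.

Lemma leavesP_node : forall g k ts, leavesP (Node g k ts) =
  map (fun x => ((g * fst (fst x))%R, snd (fst x), k :: snd x)) (concat (map leavesP ts)).
Proof. intros. simpl. f_equal; try (induction ts; simpl; auto; rewrite IHts; auto). Qed.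

Lemma leaves_node : forall g k ts, leaves (Node g k ts) =
  map (fun cj => ((g * fst cj)%R, snd cj)) (concat (map leaves ts)).
Proof. intros. simpl. f_equal; try (induction ts; simpl; auto; rewrite IHts; auto). Qed.

Lemma leaves_eq : forall t, leaves t = map fst (leavesP t).
Proof.
  apply ftree_ind2.
  - intros; simpl; auto.
  - intros g k ts IH. rewrite leaves_node, leavesP_node, map_map.
    rewrite (map_ext_in leaves (fun u => map fst (leavesP u)) ts).
    2:{ intros u Hu. rewrite Forall_forall in IH. auto. }
    rewrite <- (map_map leavesP (map fst)), <- concat_map, map_map. simpl. reflexivity.
Qed.

Section Tree.
Variables (m n s : nat -> nat) (p q : R) (NN : func -> Prop).
Hypothesis HMN : MN_conditions m n s.

Definition fsum (ts : list ftree) (i : nat) : R :=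
  fold_right (fun t' acc => (gam t' * fval m t' i + acc)%R) 0%R ts.

Lemma fval_node : forall g k ts i, fval m (Node g k ts) i = (/ INR (m k) * fsum ts i)%R.
Proof. intros. simpl. f_equal; try (induction ts; simpl; auto; rewrite IHts; auto). Qed.

Lemma tvalid_node : forall g k ts, tvalid m n p q NN (Node g k ts) ->
  g <> 0%R /\ 1 <= k /\ ts <> [] /\ block_seq (map (fval m) ts) /\ admissible (n k) (map (fval m) ts) /\
  (if Nat.even k then in_lq_ball q 1 (map gam ts)
       else in_lq_ball q (Rpower 2 (/ p)) (map gam ts) /\
            (forall t', In t' ts -> exists k', node_index t' = Some k' /\ Nat.even k' = true) /\
            NoDup (map (node_m m) ts)) /\
  Forall (tvalid m n p q NN) ts.
Proof.
  intros g k ts H. simpl in H. destruct H as [H1 [H2 [H3 [_ [H5 [H6 [H7 H8]]]]]]].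
  do 6 (split; auto). clear -H8. induction ts; auto. destruct H8. constructor; auto.
Qed.

Lemma successive_cons : forall x xs, successive (x :: xs) ->
  successive xs /\ (forall y, In y xs -> forall i j, x i <> 0%R -> y j <> 0%R -> i < j).
Proof.
  intros x xs H. split.
  - intros a b i j Hab. apply (H (S a) (S b) i j). simpl. lia.
  - intros y Hy i j Hi Hj. destruct (In_nth xs y zerof Hy) as [b [Hb Hb']].
    apply (H 0 (S b) i j). simpl; lia. auto. simpl. rewrite Hb'; auto.
Qed.

Lemma fsum_zero : forall ts j, (forall u, In u ts -> fval m u j = 0%R) -> fsum ts j = 0%R.
Proof.
  induction ts; simpl; intros j H; auto. rewrite H by auto. rewrite IHts by auto. ring.
Qed.

Lemma fsum_single : forall ts u j, successive (map (fval m) ts) -> In u ts -> fval m u j <> 0%R ->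
  fsum ts j = (gam u * fval m u j)%R.
Proof.
  induction ts as [|v ts IH]; intros u j Hs Hu Hj; [destruct Hu|]. simpl in Hs |- *.
  apply successive_cons in Hs. destruct Hs as [Hs1 Hs2].
  destruct (Req_dec (fval m v j) 0) as [Hv|Hv].
  - rewrite Hv. destruct Hu as [<-|Hu]; [congruence|]. rewrite (IH u j); auto. ring.
  - assert (u = v \/ ~ In u ts) as [->|Hn].
    { destruct Hu as [<-|Hu]; auto. exfalso. 
      pose proof (Hs2 (fval m u) (in_map _ _ _ Hu) j j Hv Hj). lia. }
    + rewrite fsum_zero. ring. intros w Hw. destruct (Req_dec (fval m w j) 0); auto.
      pose proof (Hs2 (fval m w) (in_map _ _ _ Hw) j j Hv H). lia.
    + destruct Hu as [<-|Hu]; [|tauto]. rewrite fsum_zero. ring. intros w Hw.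
      destruct (Req_dec (fval m w j) 0); auto.
      pose proof (Hs2 (fval m w) (in_map _ _ _ Hw) j j Hv H). lia.
Qed.

Lemma prodm_pos : forall l, (forall e, In e l -> 1 <= e) -> 1 <= prodm m l.
Proof.
  intros l H. apply nprod_ge1. intros y Hy. apply in_map_iff in Hy.
  destruct Hy as [e [<- He]]. apply (m_pos m n s HMN); auto.
Qed.

Lemma VL : forall t, tvalid m n p q NN t -> forall c j pa, In ((c, j), pa) (leavesP t) ->
  (gam t * fval m t j = c / INR (prodm m pa))%R /\ c <> 0%R /\ (forall e, In e pa -> 1 <= e) /\ 1 <= j.
Proof.
  apply (ftree_ind2 (fun t => tvalid m n p q NN t -> forall c j pa, In ((c, j), pa) (leavesP t) ->
    (gam t * fval m t j = c / INR (prodm m pa))%R /\ c <> 0%R /\ (forall e, In e pa -> 1 <= e) /\ 1 <= j)).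
  - intros g j Hv c j' pa Hin. simpl in Hin. destruct Hin as [Hin|[]].
    injection Hin; intros; subst. simpl in Hv. destruct Hv as [Hg [Hj _]].
    simpl. unfold ev. rewrite Nat.eqb_refl. unfold prodm. simpl.
    split. field. split; auto. split; auto. intros e [].
  - intros g k ts IH Hv c j pa Hin.
    apply tvalid_node in Hv. destruct Hv as [Hg [Hk [Hts [[_ Hsucc] [_ [_ Hall]]]]]].
    rewrite leavesP_node in Hin. apply in_map_iff in Hin. destruct Hin as [[[c' j'] pa'] [Heq Hin]].
    simpl in Heq. injection Heq; intros; subst. clear Heq.
    apply in_concat in Hin. destruct Hin as [L [HL Hin]]. apply in_map_iff in HL.
    destruct HL as [u [<- Hu]].
    rewrite Forall_forall in IH, Hall.
    destruct (IH u Hu (Hall u Hu) c' j pa' Hin) as [H1 [H2 [H3 H4]]].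
    assert (HP := prodm_pos pa' H3). apply le_INR in HP. simpl in HP.
    assert (Hmk : (1 <= INR (m k))%R) by (apply (le_INR 1); apply (m_pos m n s HMN); auto).
    assert (Hf : fval m u j <> 0%R).
    { intro H0. rewrite H0 in H1. assert (c' = 0%R). 
      { assert (c' = (c' / INR (prodm m pa')) * INR (prodm m pa'))%R by (field; lra).
        rewrite H. rewrite <- H1. ring. } tauto. }
    change (gam (Node g k ts)) with g. rewrite fval_node. rewrite (fsum_single ts u j Hsucc Hu Hf).
    unfold prodm. simpl. fold (prodm m pa'). rewrite mult_INR.
    split. rewrite <- Rmult_assoc, <- (Rmult_comm (/ INR (m k))), Rmult_assoc, H1. field. lra.
    split. intro H0. apply Rmult_integral in H0. tauto.
    split; auto. intros e [<-|He]; auto.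
Qed.

End Tree.

Open Scope nat_scope.

Lemma Forall_Forall2_ex : forall {A B} (P : A -> B -> Prop) l,
  Forall (fun a => exists b, P a b) l -> exists l', Forall2 P l l'.
Proof.
  intros A B P l H. induction H. exists []; constructor.
  destruct H as [b Hb]. destruct IHForall as [l' Hl']. exists (b :: l'). constructor; auto.
Qed.

Lemma Forall2_in : forall {A B} (R : A -> B -> Prop) l1 l2, Forall2 R l1 l2 ->
  Forall2 (fun a b => In a l1 /\ R a b) l1 l2.
Proof.
  intros A B R l1 l2 H. induction H; constructor; simpl; auto.
  eapply Forall2_impl; [|exact IHForall2]. simpl. intros a b [? ?]; auto.
Qed.

Lemma Forall2_in_r : forall {A B} (R : A -> B -> Prop) l1 l2 y, Forall2 R l1 l2 -> In y l2 ->
  exists x, In x l1 /\ R x y.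
Proof.
  intros A B R l1 l2 y H. induction H; simpl; intros Hy; [destruct Hy|].
  destruct Hy as [<-|Hy]. exists x; auto. destruct (IHForall2 Hy) as [z [? ?]]; exists z; auto.
Qed.

Lemma F2_concat_iff : forall {A} (Q : A -> nat -> Prop) ts LL,
  Forall2 (fun u l => forall i, In i l <-> Q u i) ts LL ->
  forall i, In i (concat LL) <-> exists u, In u ts /\ Q u i.
Proof.
  intros A Q ts LL H. induction H; simpl; intros i.
  - split; [intros []|intros [u [[] _]]].
  - rewrite in_app_iff, H, IHForall2. split.
    + intros [H1|[u [H2 H3]]]; eauto.
    + intros [u [[<-|H2] H3]]; eauto.
Qed.

Lemma heads_sorted : forall Ls, StronglySorted lt (concat Ls) -> Forall (fun F => F <> []) Ls ->
  StronglySorted lt (map (hd O) Ls).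
Proof.
  induction Ls as [|F Ls IH]; simpl; intros Hs Hn; constructor.
  - apply SS_app_inv in Hs. inversion Hn; subst. apply IH; tauto.
  - apply SS_app_inv in Hs. destruct Hs as [_ [H2 H3]]. inversion Hn as [|? ? HF HLs]; subst.
    apply Forall_forall. intros y Hy. apply in_map_iff in Hy. destruct Hy as [G [<- HG]].
    apply H3. destruct F; [congruence|simpl; auto].
    apply in_concat. exists G. split; auto. rewrite Forall_forall in HLs.
    destruct G; [exfalso; apply (HLs [] HG); auto|simpl; auto].
Qed.

Lemma GL : forall {A} (Rel : A -> list nat -> Prop) (f : A -> nat) Sl ts LL,
  Forall2 Rel ts LL -> NoDup (map f ts) ->
  (forall u l, In u ts -> Rel u l -> l <> [] -> In (f u) Sl) ->
  length (filter nonnil LL) <= length Sl.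
Proof.
  intros A Rel f Sl ts LL H HN HS.
  assert (exists D, length D = length (filter nonnil LL) /\ NoDup D /\ incl D Sl /\ incl D (map f ts)).
  { clear -H HN HS. induction H as [|u l ts LL Hul H IH].
    - exists []. simpl. split; [auto|split; [constructor|split; intros x []]].
    - simpl in HN. apply NoDup_cons_iff in HN. destruct HN as [HN1 HN2].
      destruct IH as [D [D1 [D2 [D3 D4]]]]; auto.
      { intros v l' Hv Hr Hn. apply (HS v l'); simpl; auto. }
      destruct l as [|x l].
      + exists D. simpl. repeat split; auto. intros y Hy. simpl. right; auto.
      + exists (f u :: D). simpl. split; [lia|]. split; [|split].
        * constructor; try (intro Hin; apply HN1; apply D4; auto); auto.
        * intros y [<-|Hy]; auto. apply (HS u (x :: l)); simpl; auto. discriminate.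
        * intros y [<-|Hy]; simpl; auto. }
  destruct H0 as [D [D1 [D2 [D3 _]]]]. rewrite <- D1. apply NoDup_incl_length; auto.
Qed.

Lemma filter_nonnil_Forall : forall (P : list nat -> Prop) LL, Forall P LL ->
  Forall (fun F => F <> [] /\ P F) (filter nonnil LL).
Proof.
  intros P LL H. induction H; simpl; auto. destruct x; simpl; auto.
  constructor; auto. split; auto. discriminate.
Qed.

Section Main.
Variables (m n s : nat -> nat) (p q : R) (NN : func -> Prop) (K : nat).
Hypothesis HMN : MN_conditions m n s.
Hypothesis HK : 1 <= K.

Definition Good (t : ftree) (pi : list nat) (i : nat) : Prop :=
  exists c pa, In ((c, i), pa) (leavesP t) /\ 2 * prodm m (pi ++ pa) <= m (2 * K) /\ 2 * K <= i.

Lemma Good_fval : forall t pi i, tvalid m n p q NN t -> Good t pi i -> fval m t i <> 0%R.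
Proof.
  intros t pi i Hv [c [pa [Hin _]]]. destruct (VL m n s p q NN HMN t Hv c i pa Hin) as [H1 [H2 [H3 _]]].
  intro H0. rewrite H0, Rmult_0_r in H1. assert (HP := prodm_pos m n s HMN pa H3).
  apply le_INR in HP. simpl in HP.
  assert (c = (c / INR (prodm m pa)) * INR (prodm m pa))%R by (field; lra).
  rewrite <- H1, Rmult_0_l in H. tauto.
Qed.

Lemma dom_heads : forall ts LL, Forall2 (fun u l => forall i, In i l -> fval m u i <> 0%R) ts LL ->
  forall la, length la = length ts ->
  (forall a, a < length ts -> is_min_supp (nth a (map (fval m) ts) zerof) (nth a la O)) ->
  dom (map (hd O) (filter nonnil LL)) la.
Proof.
  intros ts LL H. induction H as [|u l ts LL Hul H IH]; intros la Hl Hmin.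
  - constructor.
  - destruct la as [|y la]; [discriminate|]. simpl in Hl.
    assert (Hy : is_min_supp (fval m u) y) by (apply (Hmin 0); simpl; lia).
    assert (Hrest : dom (map (hd O) (filter nonnil LL)) la).
    { apply IH. lia. intros a Ha. apply (Hmin (S a)). simpl; lia. }
    destruct l as [|x l]; simpl.
    + apply dom_skip; auto.
    + apply dom_take; auto. destruct (le_lt_dec y x); auto.
      exfalso. apply (Hul x); simpl; auto. apply Hy; auto.
Qed.

Lemma sorted_concat_F2 : forall ts LL, successive (map (fval m) ts) ->
  Forall2 (fun u l => StronglySorted lt l /\ forall i, In i l -> fval m u i <> 0%R) ts LL ->
  StronglySorted lt (concat LL).
Proof.
  intros ts LL Hs H. induction H as [|u l ts LL [Hl1 Hl2] H IH]; simpl. constructor.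
  simpl in Hs. apply successive_cons in Hs. destruct Hs as [Hs1 Hs2].
  apply SS_app; auto. intros x y Hx Hy.
  apply in_concat in Hy. destruct Hy as [l' [Hl' Hy]].
  apply Forall2_in in H. destruct (Forall2_in_r _ _ _ _ H Hl') as [v [Hv [_ [_ Hv2]]]].
  apply (Hs2 (fval m v) (in_map _ _ _ Hv) x y); auto.
Qed.


Lemma Good_node : forall g e ts pi i, Good (Node g e ts) pi i <-> exists u, In u ts /\ Good u (pi ++ [e]) i.
Proof.
  intros g e ts pi i. unfold Good. rewrite leavesP_node. split.
  - intros [c [pa [Hin [H1 H2]]]]. apply in_map_iff in Hin. destruct Hin as [[[c' i'] pa'] [Heq Hin]].
    simpl in Heq. injection Heq; intros; subst. apply in_concat in Hin.
    destruct Hin as [L [HL Hin]]. apply in_map_iff in HL. destruct HL as [u [<- Hu]].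
    exists u. split; auto. exists c', pa'. split; auto. rewrite <- app_assoc. auto.
  - intros [u [Hu [c [pa [Hin [H1 H2]]]]]]. exists (g * c)%R, (e :: pa). split.
    + apply in_map_iff. exists ((c, i), pa). split; auto. apply in_concat. exists (leavesP u).
      split; auto. apply in_map; auto.
    + rewrite <- app_assoc in H1. auto.
Qed.

Lemma leavesP_node_path : forall g e ts c i pa, In ((c, i), pa) (leavesP (Node g e ts)) ->
  exists pa', pa = e :: pa'.
Proof.
  intros g e ts c i pa Hin. rewrite leavesP_node in Hin. apply in_map_iff in Hin.
  destruct Hin as [x [Heq _]]. injection Heq; intros; subst. eauto.
Qed.

Lemma cost_app : forall l1 l2, cost n (l1 ++ l2) = cost n l1 + cost n l2.
Proof. intros. unfold cost. rewrite map_app, list_sum_app. auto. Qed.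

Lemma MC : forall t, tvalid m n p q NN t -> forall pi, (forall e, In e pi -> 1 <= e) ->
  exists l, schreier (pk n s K - 1 - cost n pi) l /\ forall i, In i l <-> Good t pi i.
Proof.
  apply (ftree_ind2 (fun t => tvalid m n p q NN t -> forall pi, (forall e, In e pi -> 1 <= e) ->
    exists l, schreier (pk n s K - 1 - cost n pi) l /\ forall i, In i l <-> Good t pi i)).
  - intros g j Hv pi Hpi. simpl in Hv. destruct Hv as [Hg [Hj _]].
    destruct (le_dec (2 * prodm m (pi ++ [])) (m (2 * K))) as [H1|H1];
    [destruct (le_dec (2 * K) j) as [H2|H2]|].
    + exists [j]. split. apply schreier_single; auto.
      intros i. unfold Good. simpl. split.
      * intros [<-|[]]. exists g, []. auto.
      * intros [c [pa [[Heq|[]] _]]]. injection Heq; intros; subst. auto.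
    + exists []. split. apply schreier_nil. intros i. unfold Good. simpl. split; [intros []|].
      intros [c [pa [[Heq|[]] [_ H3]]]]. injection Heq; intros; subst. tauto.
    + exists []. split. apply schreier_nil. intros i. unfold Good. simpl. split; [intros []|].
      intros [c [pa [[Heq|[]] [H3 _]]]]. injection Heq; intros; subst. tauto.
  - intros g e ts IH Hv pi Hpi.
    assert (Hv' := Hv).
    apply tvalid_node in Hv. destruct Hv as [Hg [He [Hts [[_ Hsucc] [Hadm [Hpar Hall]]]]]].
    set (pi' := pi ++ [e]).
    assert (Hpi' : forall e', In e' pi' -> 1 <= e').
    { intros e' H. apply in_app_or in H. destruct H as [H|[<-|[]]]; auto. }
    set (a := pk n s K - 1 - cost n pi').
    assert (HF : Forall (fun u => exists l, (schreier a l /\ (forall i, In i l <-> Good u pi' i)) /\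
       tvalid m n p q NN u) ts).
    { rewrite Forall_forall in *. intros u Hu. destruct (IH u Hu (Hall u Hu) pi' Hpi') as [l Hl].
      exists l. split; auto. }
    apply Forall_Forall2_ex in HF. destruct HF as [LL HLL].
    assert (Hiff : forall i, In i (concat LL) <-> Good (Node g e ts) pi i).
    { intros i. rewrite Good_node. apply (F2_concat_iff (fun u i => Good u pi' i) ts LL).
      eapply Forall2_impl; [|exact HLL]. simpl. tauto. }
    assert (Hsupp : Forall2 (fun u l => StronglySorted lt l /\ forall i, In i l -> fval m u i <> 0%R) ts LL).
    { eapply Forall2_impl; [|exact HLL]. simpl. intros u l [[H1 H2] H3]. split.
      eapply schreier_sorted; eauto. intros i Hi. apply (Good_fval u pi' i H3). apply H2; auto. }
    assert (Hsort : StronglySorted lt (concat LL)) by (eapply sorted_concat_F2; eauto).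
    destruct (concat LL) as [|i0 l0] eqn:Ecat.
    { exists []. split. apply schreier_nil. intros i. rewrite <- Hiff. tauto. }
    exists (concat LL). rewrite Ecat. split; auto.
    assert (Hcost : cost n pi + cst n e <= pk n s K - 1).
    { assert (Hg0 : Good (Node g e ts) pi i0) by (apply Hiff; simpl; auto).
      apply Good_node in Hg0. destruct Hg0 as [u [Hu [c [pa [Hin [H1 H2]]]]]].
      rewrite Forall_forall in Hall.
      destruct (VL m n s p q NN HMN u (Hall u Hu) c i0 pa Hin) as [_ [_ [H3 _]]].
      assert (HAL := AL m n s HMN K (pi' ++ pa) HK
        ltac:(intros e' H; apply in_app_or in H; destruct H; auto) H1).
      unfold pi' in HAL. rewrite !cost_app in HAL. unfold cost at 2 in HAL. simpl in HAL. lia. }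
    rewrite <- Ecat.
    set (Ls := filter nonnil LL).
    assert (HLs : Forall (fun F => F <> [] /\ schreier a F) Ls).
    { apply filter_nonnil_Forall. apply Forall_forall. intros l Hl.
      destruct (Forall2_in_r _ _ _ _ HLL Hl) as [u [_ [[H1 _] _]]]. auto. }
    assert (HcatLs : concat Ls = concat LL) by apply concat_filter_nonnil.
    assert (HsortLs : StronglySorted lt (concat Ls)) by (rewrite HcatLs, Ecat; auto).
    assert (Hheads : StronglySorted lt (map (hd O) Ls)).
    { apply heads_sorted; auto. eapply Forall_impl; [|exact HLs]. simpl; tauto. }
    assert (Hpicost : cost n pi' = cost n pi + cst n e).
    { unfold pi'. rewrite cost_app. unfold cost at 2. simpl. lia. }
    rewrite <- HcatLs.
    destruct (Nat.even e) eqn:Ee.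
    +
      destruct Hadm as [la [Hla1 [Hla2 Hla3]]]. rewrite length_map in Hla1, Hla2.
      assert (Hdom : dom (map (hd O) Ls) la).
      { apply (dom_heads ts LL); auto. eapply Forall2_impl; [|exact Hsupp]. simpl; tauto. }
      assert (Hh := dom_schreier _ _ _ Hla3 Hheads Hdom).
      assert (Hu := union_schreier (n e) a Ls HLs HsortLs Hh).
      unfold cst in Hcost, Hpicost. rewrite Ee in Hcost, Hpicost.
      replace (pk n s K - 1 - cost n pi) with (a + n e) by (unfold a; lia). auto.
    +
      destruct Hpar as [_ [Hchild HND]].
      assert (Hlen : length Ls <= K - 1).
      { replace (K - 1) with (length (map (fun i => m (2 * i)) (seq 1 (K - 1))))
          by (rewrite length_map, length_seq; auto).
        apply (GL _ (node_m m) _ ts LL (Forall2_in _ _ _ HLL) HND).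
        intros u l Hu [_ [[_ Hl] Huv]] Hn.
        destruct l as [|i l]; [congruence|].
        assert (Hgood : Good u pi' i) by (apply Hl; simpl; auto).
        destruct (Hchild u Hu) as [e' [Hidx He']].
        destruct u as [g' j'|g' e'' ts']; [discriminate|]. simpl in Hidx. injection Hidx; intros; subst e''.
        destruct Hgood as [c [pa [Hin [H1 H2]]]].
        destruct (leavesP_node_path _ _ _ _ _ _ Hin) as [pa' ->].
        destruct (VL m n s p q NN HMN _ Huv c i _ Hin) as [_ [_ [H3 _]]].
        assert (He'1 : 1 <= e') by (apply H3; simpl; auto).
        assert (Hle : m e' <= prodm m (pi' ++ e' :: pa')).
        { apply nprod_ge_elt. intros y Hy. apply in_map_iff in Hy. destruct Hy as [z [<- Hz]].
          apply (m_pos m n s HMN). apply in_app_or in Hz. destruct Hz; auto.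
          apply in_map. apply in_or_app. right. simpl; auto. }
        assert (Hlt : e' < 2 * K).
        { pose proof (m_pos m n s HMN e' He'1). apply (m_mono_inv m n s HMN); lia. }
        destruct (even_decomp e' He') as [i' ->].
        simpl. apply in_map_iff. exists i'. split; auto. apply in_seq. lia. }
      assert (Hone : schreier 1 (map (hd O) Ls)).
      { assert (Hhd : forall x, In x (map (hd O) Ls) -> 2 * K <= x).
        { intros x Hx. apply in_map_iff in Hx. destruct Hx as [F [<- HF]].
          assert (HF' := HF). unfold Ls in HF'. apply filter_In in HF'. destruct HF' as [HF1 HF2].
          destruct F as [|y F]; [discriminate|]. simpl.
          assert (Good (Node g e ts) pi y). { apply Hiff. rewrite <- Ecat. apply in_concat. exists (y :: F); simpl; auto. }
          destruct H as [c [pa [_ [_ H]]]]. auto. }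
        apply schreier_one; auto.
        - destruct Ls as [|F Ls'] eqn:EL; [|discriminate]. simpl in HcatLs. congruence.
        - intros x Hx. specialize (Hhd x Hx). lia.
        - rewrite length_map. destruct (map (hd O) Ls) as [|x l] eqn:Em.
          + destruct Ls; [simpl in HcatLs; congruence|discriminate].
          + simpl. specialize (Hhd x ltac:(simpl; auto)). 
            apply (f_equal (@length nat)) in Em. rewrite length_map in Em. simpl in Em. lia. }
      assert (Hu := union_schreier 1 a Ls HLs HsortLs Hone).
      unfold cst in Hcost, Hpicost. rewrite Ee in Hcost, Hpicost.
      replace (pk n s K - 1 - cost n pi) with (a + 1) by (unfold a; lia). auto.
Qed.

End Main.

Open Scope R_scope.

Lemma RL : forall c (P M : nat), c <> 0 -> (1 <= P)%nat -> (1 <= M)%nat ->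
  (Rabs (c / INR P) >= 2 * Rabs c / INR M <-> (2 * P <= M)%nat).
Proof.
  intros c P M Hc HP HM.
  apply le_INR in HP. apply le_INR in HM. simpl in HP, HM.
  assert (HA : 0 < Rabs c) by (apply Rabs_pos_lt; auto).
  replace (Rabs (c / INR P)) with (Rabs c / INR P) by (unfold Rdiv; rewrite Rabs_mult, Rabs_inv, (Rabs_pos_eq (INR P)); lra).
  split.
  - intros H. apply INR_le. rewrite mult_INR. simpl.
    assert (H' : Rabs c * INR M >= 2 * Rabs c * INR P).
    { apply Rle_ge. apply Rge_le in H.
      apply (Rmult_le_compat_r (INR P * INR M)) in H; [|nra].
      replace (2 * Rabs c / INR M * (INR P * INR M)) with (2 * Rabs c * INR P) in H by (field; lra).
      replace (Rabs c / INR P * (INR P * INR M)) with (Rabs c * INR M) in H by (field; lra). lra. }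
    nra.
  - intros H. apply le_INR in H. rewrite mult_INR in H. simpl in H.
    apply Rle_ge.
    assert (E1 : Rabs c / INR P = Rabs c * INR M / (INR P * INR M)) by (field; lra).
    assert (E2 : 2 * Rabs c / INR M = 2 * Rabs c * INR P / (INR P * INR M)) by (field; lra).
    rewrite E1, E2. unfold Rdiv. apply Rmult_le_compat_r.
    apply Rlt_le, Rinv_0_lt_compat. nra. nra.
Qed.

Theorem mainTheorem10 (m n s : nat -> nat) (p q : R) (NN : func -> Prop)
  (x : func) (t : ftree) (k : nat)
  (HMN : MN_conditions m n s)
  (Hp : 1 < p) (Hq : 1 < q) (Hpq : / p + / q = 1)
  (HNN : schreier_norming m n p q NN)
  (Hx : NN x) (Ht : functional_tree m n p q NN x t) (Hk : (1 <= k)%nat) :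
  in_schreier (pk n s k - 1)
    (fun i => exists c, In (c, i) (leaves t) /\
       Rabs (x i) >= 2 * Rabs c / INR (m (2 * k)%nat) /\ (2 * k <= i)%nat).
Proof.
  destruct Ht as [Hgam [Hxeq Hv]].
  destruct (MC m n s p q NN k HMN Hk t Hv [] (fun e H => match H with end)) as [l [Hl Hiff]].
  exists l. split.
  { unfold cost in Hl. simpl in Hl. rewrite Nat.sub_0_r in Hl. exact Hl. }
  assert (HM : (1 <= m (2 * k))%nat) by (apply (m_pos m n s HMN); lia).
  intros i. rewrite Hiff. unfold Good. simpl. split.
  - intros [c [pa [Hin [H1 H2]]]].
    destruct (VL m n s p q NN HMN t Hv c i pa Hin) as [V1 [V2 [V3 _]]].
    exists c. split. rewrite leaves_eq. apply in_map_iff. exists ((c, i), pa); auto.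
    split; auto. rewrite Hxeq, V1. apply RL; auto. apply (prodm_pos m n s HMN); auto.
  - intros [c [Hin [H1 H2]]]. rewrite leaves_eq in Hin. apply in_map_iff in Hin.
    destruct Hin as [[[c' i'] pa] [Heq Hin]]. simpl in Heq. injection Heq as -> ->.
    destruct (VL m n s p q NN HMN t Hv c i pa Hin) as [V1 [V2 [V3 _]]].
    exists c, pa. split; auto. split; auto. rewrite Hxeq, V1 in H1.
    apply RL in H1; auto. apply (prodm_pos m n s HMN); auto.
Qed.
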